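(* Let $S=\{1,\dots,k\}$ with $k\ge3$ and $c\in\mathbb{R}_+$. Then $\Phi(B_c)=P_c$, $\Psi(P_c)\subseteq B_c$, $\Phi(\overline B_c)=\overline P_c$, and $\Psi(\overline P_c)\subseteq\overline B_c$.
   Context: $S^\pm=S\times\{\pm1\}$ with $i^\pm=(i,\pm1)$, $S^+=\{i^+:i\in S\}$, $S^-=\{i^-:i\in S\}$; for a vector $x$ and a set $X$, $x(X)=\sum_{u\in X}x(u)$. $\Phi:\mathbb{R}^{S^\pm}\to\mathbb{R}^S$, $\Phi(x)(i)=(x(i^+)-x(i^-))/2$; $\Psi:\mathbb{R}^S\to\mathbb{R}^{S^\pm}$, $\Psi(z)(i^+)=z(i)$, $\Psi(z)(i^-)=-z(i)$. $P_c$ is the set of $z\in\mathbb{R}_+^S$ with $z(S)\le2c$ and $z(t)\le z(S\setminus\{t\})$ for all $t\in S$; $\overline P_c$ is the same with $z(S)=2c$ instead of $z(S)\le 2c$. $B_c$ is the set of $x\in\mathbb{R}^{S^\pm}$ with $x(S^\pm)=0$, $x(S^+)\le 2c$, $x(i^+)+x(S^-\setminus\{i^-\})\le0$ for all $i\in S$, $0\le x(i^+)\le c$ and $-c\le x(i^-)\le 0$ for all $i\in S$; $\overline B_c$ is the set of $x\in B_c$ with additionally $x(S^-)\le -2c$. *)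

(* Defs.v *)
From mathcomp Require Import all_boot all_order all_algebra.
From mathcomp Require Import reals.
Set Implicit Arguments. Unset Strict Implicit. Unset Printing Implicit Defensive.
Import Order.TTheory GRing.Theory Num.Theory.
Local Open Scope ring_scope.

(* S = 'I_k ; S^pm = 'I_k * bool, with (i, true) = i^+ and (i, false) = i^-. *)
Section Defs.
Variables (R : realType) (k : nat).

Definition Spm := ('I_k * bool)%type.

Definition Phi (x : Spm -> R) : 'I_k -> R :=
  fun i => (x (i, true) - x (i, false)) / 2.

Definition Psi (z : 'I_k -> R) : Spm -> R :=
  fun u => if u.2 then z u.1 else - z u.1.

Definition inP (c : R) (z : 'I_k -> R) : Prop :=
  (forall i, 0 <= z i) /\
  \sum_(i : 'I_k) z i <= 2 * c /\
  (forall t : 'I_k, z t <= \sum_(i | i != t) z i).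

Definition inPbar (c : R) (z : 'I_k -> R) : Prop :=
  (forall i, 0 <= z i) /\
  \sum_(i : 'I_k) z i = 2 * c /\
  (forall t : 'I_k, z t <= \sum_(i | i != t) z i).

Definition inB (c : R) (x : Spm -> R) : Prop :=
  \sum_(u : Spm) x u = 0 /\
  \sum_(i : 'I_k) x (i, true) <= 2 * c /\
  (forall i : 'I_k, x (i, true) + \sum_(j | j != i) x (j, false) <= 0) /\
  (forall i : 'I_k, 0 <= x (i, true) <= c) /\
  (forall i : 'I_k, - c <= x (i, false) <= 0).

Definition inBbar (c : R) (x : Spm -> R) : Prop :=
  inB c x /\ \sum_(i : 'I_k) x (i, false) <= - (2 * c).

End Defs.

(* Main.v *)
Require Import Defs.
From mathcomp Require Import all_boot all_order all_algebra.
From mathcomp Require Import reals.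
From mathcomp Require Import lra.
From Stdlib Require Import FunctionalExtensionality.
Import Order.TTheory GRing.Theory Num.Theory.
Local Open Scope ring_scope.

Section H.
Variables (R : realType) (k : nat).

Lemma sumSpm (x : Spm k -> R) :
  \sum_(u : Spm k) x u = \sum_i x (i, true) + \sum_i x (i, false).
Proof.
rewrite -big_split /=.
rewrite (eq_bigr (fun i => \sum_(b : bool) x (i, b))); last by move=> i _; rewrite big_bool.
rewrite pair_big /=; apply: eq_bigr; by case.
Qed.

Lemma sumD1 (f : 'I_k -> R) i : \sum_(j | j != i) f j = \sum_j f j - f i.
Proof. rewrite [X in _ = X - _](bigD1 i) //=; lra. Qed.

Lemma sumPhi (x : Spm k -> R) :
  \sum_i Phi x i = (\sum_i x (i, true) - \sum_i x (i, false)) / 2.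
Proof. by rewrite /Phi -mulr_suml sumrB. Qed.

Lemma BtoP (c : R) (x : Spm k -> R) : inB c x -> inP c (Phi x) /\ \sum_i Phi x i = \sum_i x (i, true).
Proof.
move=> [h0 [h1 [h2 [h3 h4]]]].
rewrite sumSpm in h0.
have hs : \sum_i Phi x i = \sum_i x (i, true) by rewrite sumPhi; lra.
split => //; split; [|split].
- move=> i; rewrite /Phi; have := h3 i; have := h4 i; move=> /andP[? ?] /andP[? ?]; lra.
- by rewrite hs.
- move=> t; rewrite sumD1 hs; have := h2 t; rewrite sumD1 /Phi; lra.
Qed.

Lemma PhiPsi (z : 'I_k -> R) : Phi (Psi z) = z.
Proof. apply: functional_extensionality => i; rewrite /Phi /Psi /=; lra. Qed.

Lemma sumPsiT (z : 'I_k -> R) : \sum_i Psi z (i, true) = \sum_i z i.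
Proof. by []. Qed.

Lemma sumPsiF (z : 'I_k -> R) : \sum_i Psi z (i, false) = - \sum_i z i.
Proof. by rewrite /Psi /= sumrN. Qed.

Lemma PtoB (c : R) (z : 'I_k -> R) : inP c z -> inB c (Psi z).
Proof.
move=> [h0 [h1 h2]].
split; [|split; [|split; [|split]]].
- rewrite sumSpm sumPsiT sumPsiF; lra.
- by rewrite sumPsiT.
- move=> i; rewrite sumD1 sumPsiF /Psi /=; have := h2 i; rewrite sumD1; lra.
- move=> i; rewrite /Psi /=; have := h2 i; rewrite sumD1 => ?; have := h0 i => ?.
  apply/andP; split; lra.
- move=> i; rewrite /Psi /=; have := h2 i; rewrite sumD1 => ?; have := h0 i => ?.
  apply/andP; split; lra.
Qed.

End H.

Theorem lemma4p1 (R : realType) (k : nat) (c : R) :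
  (3 <= k)%N -> 0 <= c ->
  (forall z : 'I_k -> R, inP c z <-> exists x, inB c x /\ Phi x = z) /\
  (forall z : 'I_k -> R, inP c z -> inB c (Psi z)) /\
  (forall z : 'I_k -> R, inPbar c z <-> exists x, inBbar c x /\ Phi x = z) /\
  (forall z : 'I_k -> R, inPbar c z -> inBbar c (Psi z)).
Proof.
move=> _ _.
have PbB : forall z : 'I_k -> R, inPbar c z -> inBbar c (Psi z).
  move=> z [h0 [h1 h2]]; split.
    by apply: PtoB; split => //; split => //; rewrite h1.
  by rewrite sumPsiF h1.
split; [|split; [|split]] => //.
- move=> z; split.
    by move=> hz; exists (Psi z); split; [apply: PtoB | apply: PhiPsi].
  by move=> [x [hx <-]]; case: (@BtoP R k c x hx).
- exact: PtoB.
- move=> z; split.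
    by move=> hz; exists (Psi z); split; [apply: PbB | apply: PhiPsi].
  move=> [x [[hx hm] <-]]; case: (@BtoP R k c x hx) => [[p0 [p1 p2]] hs].
  split => //; split => //.
  move: hx => [h0 [h1 _]]; rewrite sumSpm in h0; rewrite hs; lra.
Qed.
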